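(* In the standing setup, let $S\in\mathfrak{S}$ be positively enabled and $T\in\mathfrak{S}$ negatively enabled, and let $A_S=\mathrm{eff}(\sigma^+_S)$, $B_T=-\mathrm{eff}(\sigma^-_T)$. Then $$\sum_{i\in\mathcal{N}_{(S,\cdot)}}\mathrm{len}(\rho^i_{\mathrm{cap}})\le A_S\cdot n,\qquad \sum_{i\in\mathcal{N}_{(\cdot,T)}}\mathrm{len}(\rho^i_{\mathrm{cap}})\le n\cdot B_T,$$ and moreover $\sum_{i\in\mathcal{N}}\mathrm{len}(\rho^i_{\mathrm{cap}})\le n^2$.
   Context: $\mathbb{N}=\{0,1,2,\dots\}$. A one-counter system (OCS) $\mathcal{O}$ consists of a finite set $Q$ of states, a set $T_{>0}\subseteq Q\times\{-1,0,1\}\times Q$ of non-zero transitions and a set $T_{=0}\subseteq Q\times\{0,1\}\times Q$ of zero tests. A configuration is a pair $(q,c)\in Q\times\mathbb{N}$ (state $q$, counter value $c$). A transition $t=(p,d,q)$ has source $p$, target $q$, effect $d$; it can be fired in $(p,c)$ if either $t\in T_{>0}$ and $c>0$, or $t\in T_{=0}$ and $c=0$, yielding $(q,c+d)$. A path is a sequence $(\gamma_1,t_1)\cdots(\gamma_m,t_m)$ such that, with some $\gamma_{m+1}$, firing $t_i$ in $\gamma_i$ yields $\gamma_{i+1}$ for all $i\le m$; its source is $\gamma_1$, target $\gamma_{m+1}$, length $\mathrm{len}=m$, configurations appearing on it are $\gamma_1,\dots,\gamma_{m+1}$, intermediate ones are $\gamma_2,\dots,\gamma_m$; its projection is $\mathrm{proj}=t_1\cdots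 t_m$ and its effect $\mathrm{eff}$ is the sum of the effects of its transitions. A sequence of transitions is consistent if each transition's target is the next one's source. A cycle is a consistent sequence of non-zero transitions starting and ending in the same state (its base state); positive/negative if its effect is positive/negative; simple if no state is visited twice except the base at start and end. The transition multigraph $G$ has vertices $Q$ and an edge $p\to q$ labelled $d$ for each $(p,d,q)\in T_{>0}$; $\mathfrak{S}$ is the set of its SCCs and $n_S$ the number of states in $S\in\mathfrak{S}$. A cycle is contained in $S$ if all its states lie in $S$; $S$ is positively (negatively) enabled if it contains a positive (negative) cycle. For every positively enabled $S$ a simple positive cycle $\sigma^+_S$ contained in $S$ is fixed, and for every negatively enabled $T$ a simple negative cycle $\sigma^-_T$ contained in $T$. An arc is a path whose source and target have counter value $0$ and whose intermediate configurations have positive counter value. A path is low if all configurations appearing on it have counter value $<5n$, where $n=|Q|$. For $S,T\in\mathfrak{S}$, an arc $\rho$ is $(S,T)$-normal if $\rho=\rho_{\mathrm{pref}}\rho_{\mathrm{up}}\rho_{\mathrm{cap}}\rho_{\mathrm{down}}\rho_{\mathrm{suff}}$ (normal decomposition) with $\rho_{\mathrm{pref}},\rho_{\mathrm{suff}}$ low, $\mathrm{proj}(\rho_{\mathrm{up}})=(\sigma^+_S)^a$, $\mathrm{proj}(\rho_{\mathrm{down}})=(\sigma^-_T)^b$ for some $a,b\in\mathbb{N}$, the source of $\rho_{\mathrm{cap}}$ having the base state of $\sigma^+_S$ and its target the base state of $\sigma^-_T$. Writing $A=\mathrm{eff}(\sigma^+_S)$, $B=-\mathrm{eff}(\sigma^-_T)$,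 such a decomposition is good if: (iii) $aA\le 2\,\mathrm{len}(\rho_{\mathrm{cap}})+2\,\mathrm{lcm}(A,B)$; (iv) $bB\le 2\,\mathrm{len}(\rho_{\mathrm{cap}})+2\,\mathrm{lcm}(A,B)$; (v) no infix of $\mathrm{proj}(\rho_{\mathrm{cap}})$ is a cycle with effect divisible by $\gcd(A,B)$; (vi) the target of $\rho_{\mathrm{up}}$ and the source of $\rho_{\mathrm{down}}$ have counter values $>n$; (vii) all configurations appearing on $\rho_{\mathrm{pref}}$ and $\rho_{\mathrm{suff}}$ together are pairwise distinct. Standing setup: $\alpha,\beta$ are configurations with counter value $0$; $\rho=\rho^1\rho^2\cdots\rho^k$ is a path from $\alpha$ to $\beta$ that has the minimum possible number of appearing configurations with counter value $0$ among all paths from $\alpha$ to $\beta$; each $\rho^i$ is an arc; $\{1,\dots,k\}=\mathcal{L}\sqcup\mathcal{N}$ where for $i\in\mathcal{L}$, $\rho^i$ is a low arc of minimum length among all low arcs with the same source and target, and for $i\in\mathcal{N}$, $\rho^i$ is $(S_i,T_i)$-normal for some $S_i,T_i\in\mathfrak{S}$ with a fixed good normal decomposition $\rho^i=\rho^i_{\mathrm{pref}}\rho^i_{\mathrm{up}}\rho^i_{\mathrm{cap}}\rho^i_{\mathrm{down}}\rho^i_{\mathrm{suff}}$. For $S,T\in\mathfrak{S}$: $\mathcal{N}_{(S,T)}=\{i\in\mathcal{N}: (S_i,T_i)=(S,T)\}$, $\mathcal{N}_{(S,\cdot)}=\{i\in\mathcal{N}:S_i=S\}$, $\mathcal{N}_{(\cdot,T)}=\{i\in\mathcal{N}:T_i=T\}$.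 *)

(* Defs.v *)
From mathcomp Require Import all_boot all_order all_algebra.
Set Implicit Arguments. Unset Strict Implicit. Unset Printing Implicit Defensive.
Import GRing.Theory Num.Theory.

Definition trans (Q : finType) := (Q * int * Q)%type.
Definition tsrc (Q : finType) (t : trans Q) : Q := t.1.1.
Definition teff (Q : finType) (t : trans Q) : int := t.1.2.
Definition ttgt (Q : finType) (t : trans Q) : Q := t.2.

Record ocs (Q : finType) := OCS {
  Tpos : pred (trans Q);
  Tzero : pred (trans Q);
  Tpos_eff : forall t, Tpos t -> teff t \in [:: (-1)%R; 0%R; 1%R];
  Tzero_eff : forall t, Tzero t -> teff t \in [:: 0%R; 1%R]
}.

Definition config (Q : finType) := (Q * nat)%type.

(* A path is given by its source configuration γ_1 and its projection t_1 ⋯ t_m;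
   the configurations γ_2,…,γ_{m+1} are then determined. *)
Record opath (Q : finType) := OPath { psrc : config Q; ptr : seq (trans Q) }.

Section OCS.
Variables (Q : finType) (O : ocs Q).

Definition n_states : nat := #|Q|.

Definition firable (t : trans Q) (g : config Q) : bool :=
  (tsrc t == g.1) &&
  ((Tpos O t && (0 < g.2)%N) || (Tzero O t && (g.2 == 0)%N)).
Definition next (t : trans Q) (g : config Q) : config Q :=
  (ttgt t, absz (Posz g.2 + teff t)%R).

Fixpoint valid_from (g : config Q) (ts : seq (trans Q)) : bool :=
  match ts with
  | [::] => true
  | t :: ts' => firable t g && valid_from (next t g) ts'
  end.

Definition pvalid (p : opath Q) : bool := valid_from (psrc p) (ptr p).

Definition pafter (p : opath Q) : seq (config Q) :=
  scanl (fun g t => next t g) (psrc p) (ptr p).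
Definition pcfgs (p : opath Q) : seq (config Q) := psrc p :: pafter p.
Definition pinter (p : opath Q) : seq (config Q) :=
  take (size (pafter p)).-1 (pafter p).
Definition ptgt (p : opath Q) : config Q := last (psrc p) (pafter p).
Definition plen (p : opath Q) : nat := size (ptr p).

Definition seff (s : seq (trans Q)) : int := (\sum_(t <- s) teff t)%R.

Fixpoint consistent (s : seq (trans Q)) : bool :=
  match s with
  | t1 :: ((t2 :: _) as s') => (ttgt t1 == tsrc t2) && consistent s'
  | _ => true
  end.

Definition is_cycle (s : seq (trans Q)) : bool :=
  match s with
  | [::] => false
  | t :: _ => [&& all (Tpos O) s, consistent s & ttgt (last t s) == tsrc t]
  end.
Definition cycle_states (s : seq (trans Q)) : seq Q := map (@tsrc Q) s.
Definition simple_cycle (s : seq (trans Q)) : bool :=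
  is_cycle s && uniq (cycle_states s).
Definition base_state (s : seq (trans Q)) (d : Q) : Q := head d (cycle_states s).

Definition gedge : rel Q :=
  fun p q => has (fun d => Tpos O (p, d, q)) [:: (-1)%R; 0%R; 1%R].
Definition is_scc (S : {set Q}) : Prop :=
  exists q : Q, S = [set p | connect gedge q p && connect gedge p q].

Definition contained (S : {set Q}) (s : seq (trans Q)) : bool :=
  all (fun q => q \in S) (cycle_states s).
Definition pos_enabled (S : {set Q}) : Prop :=
  exists s, [&& is_cycle s, (0 < seff s)%R & contained S s].
Definition neg_enabled (S : {set Q}) : Prop :=
  exists s, [&& is_cycle s, (seff s < 0)%R & contained S s].

Definition is_arc (p : opath Q) : bool :=
  [&& pvalid p, (psrc p).2 == 0%N, (ptgt p).2 == 0%N &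
      all (fun g => (0 < g.2)%N) (pinter p)].
Definition is_low (p : opath Q) : bool :=
  all (fun g => (g.2 < 5 * n_states)%N) (pcfgs p).

Definition chain (ps : seq (opath Q)) : bool :=
  match ps with
  | [::] => true
  | p :: ps' => path (fun p1 p2 => ptgt p1 == psrc p2) p ps'
  end.
Definition decomp (p : opath Q) (ps : seq (opath Q)) : bool :=
  [&& chain ps, psrc (head p ps) == psrc p & ptr p == flatten (map (@ptr Q) ps)].

Definition nzeros (p : opath Q) : nat := count (fun g => g.2 == 0%N) (pcfgs p).

Definition sigma_ok (sigp sigm : {set Q} -> seq (trans Q)) : Prop :=
  (forall S, is_scc S -> pos_enabled S ->
     [&& simple_cycle (sigp S), (0 < seff (sigp S))%R & contained S (sigp S)]) /\
  (forall T, is_scc T -> neg_enabled T ->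
     [&& simple_cycle (sigm T), (seff (sigm T) < 0)%R & contained T (sigm T)]).

Definition Aof (sigp : {set Q} -> seq (trans Q)) (S : {set Q}) : nat :=
  absz (seff (sigp S)).
Definition Bof (sigm : {set Q} -> seq (trans Q)) (T : {set Q}) : nat :=
  absz (- seff (sigm T))%R.

Definition normal_decomp (sigp sigm : {set Q} -> seq (trans Q))
    (S T : {set Q}) (rho pref up cap down suff : opath Q) (a b : nat) : Prop :=
  [/\ is_scc S, is_scc T, pos_enabled S & neg_enabled T] /\
  [/\ is_arc rho & decomp rho [:: pref; up; cap; down; suff]] /\
  [/\ is_low pref, is_low suff,
      ptr up = flatten (nseq a (sigp S)) &
      ptr down = flatten (nseq b (sigm T))] /\
  (forall d, (psrc cap).1 = base_state (sigp S) d) /\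
  (forall d, (ptgt cap).1 = base_state (sigm T) d).

Definition good_decomp (sigp sigm : {set Q} -> seq (trans Q))
    (S T : {set Q}) (pref up cap down suff : opath Q) (a b : nat) : Prop :=
  let A := Aof sigp S in let B := Bof sigm T in
  [/\ (a * A <= 2 * plen cap + 2 * lcmn A B)%N,
      (b * B <= 2 * plen cap + 2 * lcmn A B)%N,
      (forall s, infix s (ptr cap) -> is_cycle s ->
          ~~ (gcdn A B %| absz (seff s))%N),
      (n_states < (ptgt up).2)%N /\ (n_states < (psrc down).2)%N &
      uniq (pcfgs pref ++ pcfgs suff)].

Definition min_low_arc (p : opath Q) : Prop :=
  is_arc p /\ is_low p /\
  forall p', is_arc p' -> is_low p' -> psrc p' = psrc p -> ptgt p' = ptgt p ->
    (plen p <= plen p')%N.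

End OCS.

(* Main.v *)
Require Import Defs.
From mathcomp Require Import all_boot all_order all_algebra zify.
Set Implicit Arguments. Unset Strict Implicit. Unset Printing Implicit Defensive.
Import GRing.Theory Num.Theory.

Definition stp (Q : finType) (g : config Q) (t : trans Q) : config Q := Defs.next t g.
Definition cf (Q : finType) (g : config Q) (s : seq (trans Q)) := g :: scanl (@stp Q) g s.
Definition endc (Q : finType) (g : config Q) (s : seq (trans Q)) := foldl (@stp Q) g s.
Definition zc (Q : finType) (g : config Q) (s : seq (trans Q)) :=
  count (fun x : config Q => x.2 == 0%N) (cf g s).

Lemma endc_cat (Q : finType) (g : config Q) s1 s2 : endc g (s1 ++ s2) = endc (endc g s1) s2.
Proof. by rewrite /endc foldl_cat. Qed.

Lemma last_scanl (Q : finType) (g : config Q) s : last g (scanl (@stp Q) g s) = endc g s.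
Proof. by elim: s g => [|t s IH] g //=. Qed.

Lemma ptgtE (Q : finType) (p : opath Q) : ptgt p = endc (psrc p) (ptr p).
Proof. by rewrite /ptgt /pafter last_scanl. Qed.

Lemma pcfgsE (Q : finType) (p : opath Q) : pcfgs p = cf (psrc p) (ptr p).
Proof. by []. Qed.

Lemma nzerosE (Q : finType) (p : opath Q) : nzeros p = zc (psrc p) (ptr p).
Proof. by []. Qed.

Lemma valid_cat (Q : finType) (O : ocs Q) g s1 s2 :
  valid_from O g (s1 ++ s2) = valid_from O g s1 && valid_from O (endc g s1) s2.
Proof. by elim: s1 g => [|t s IH] g //=; rewrite IH andbA. Qed.

Lemma cf_cat (Q : finType) (g : config Q) s1 s2 :
  cf g (s1 ++ s2) = cf g s1 ++ behead (cf (endc g s1) s2).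
Proof. by rewrite /cf scanl_cat. Qed.

Lemma zc_cat (Q : finType) (g : config Q) s1 s2 :
  zc g (s1 ++ s2) + ((endc g s1).2 == 0%N) = zc g s1 + zc (endc g s1) s2.
Proof. rewrite /zc cf_cat count_cat /= /cf /=. lia. Qed.

Lemma zc_nil (Q : finType) (g : config Q) : zc g [::] = (g.2 == 0%N).
Proof. by rewrite /zc /= addn0. Qed.

Lemma zc_ge (Q : finType) (g : config Q) s : s != [::] ->
  (g.2 == 0%N) + ((endc g s).2 == 0%N) <= zc g s.
Proof.
rewrite /zc /cf /= => /negbTE sn. rewrite leq_add2l.
have : endc g s \in scanl (@stp Q) g s.
  rewrite -last_scanl. case: s sn => [|t s] //= _. by rewrite mem_last.
move=> H. case: eqP => //= E. rewrite lt0n -lt0n -has_count. apply/hasP. exists (endc g s) => //. by rewrite E.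
Qed.

Lemma zc_ge1 (Q : finType) (g : config Q) s : (g.2 == 0%N) <= zc g s.
Proof. rewrite /zc /=. lia. Qed.

Lemma zc_ge2 (Q : finType) (g : config Q) s : ((endc g s).2 == 0%N) <= zc g s.
Proof.
case: s => [|t s]. by rewrite zc_nil.
have := zc_ge g (s:=t::s) isT. lia.
Qed.

Definition posrun (Q : finType) (O : ocs Q) g s :=
  valid_from O g s && all (fun x : config Q => 0 < x.2) (cf g s).
Definition shift (Q : finType) (d : nat) (x : config Q) : config Q := (x.1, x.2 + d).

Lemma teff_bounds (Q : finType) (O : ocs Q) t : Tpos O t -> (-1 <= teff t <= 1)%R.
Proof. move/Tpos_eff. rewrite !inE => /or3P [] /eqP ->; by []. Qed.

Lemma firable_pos (Q : finType) (O : ocs Q) t (g : config Q) :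
  (0 < g.2)%N -> firable O t g = (tsrc t == g.1) && Tpos O t.
Proof.
rewrite /firable => h. have -> : (g.2 == 0%N) = false by lia.
by rewrite h andbT andbF orbF.
Qed.

Lemma posrun_cons (Q : finType) (O : ocs Q) g t s :
  posrun O g (t :: s) = [&& (tsrc t == g.1), Tpos O t, 0 < g.2 & posrun O (stp g t) s].
Proof.
rewrite /posrun /cf /=. case h: (0 < g.2)%N; last by rewrite !andbF; case: (tsrc t == g.1); case: (Tpos O t).
rewrite firable_pos //. by case: (tsrc t == g.1); case: (Tpos O t); case: (valid_from _ _ _) => //=.
Qed.

Lemma posrun_cat (Q : finType) (O : ocs Q) g s1 s2 :
  posrun O g (s1 ++ s2) = posrun O g s1 && posrun O (endc g s1) s2.
Proof.
elim: s1 g => [|t s IH] g /=.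
  rewrite /posrun /=. case: s2 => [|t s2] /=; first by rewrite andbT andbb.
  by case: (0 < g.2)%N; rewrite /= ?andbF // andbT.
by rewrite !posrun_cons IH !andbA.
Qed.

Lemma stp_shift (Q : finType) (O : ocs Q) (g : config Q) t d :
  Tpos O t -> (0 < g.2)%N -> stp (shift d g) t = shift d (stp g t).
Proof.
move=> /teff_bounds /andP [h1 h2] hg.
rewrite /stp /shift /Defs.next /=. congr (_, _). lia.
Qed.

Lemma cf_cons (Q : finType) (g : config Q) t s : cf g (t :: s) = g :: cf (stp g t) s.
Proof. by []. Qed.

Lemma posrun_shift (Q : finType) (O : ocs Q) g s d :
  posrun O g s -> posrun O (shift d g) s /\ cf (shift d g) s = map (shift d) (cf g s).
Proof.
elim: s g => [|t s IH] g.
  rewrite /posrun /cf /= !andbT => h. split => //. rewrite /shift /=. lia.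
rewrite !posrun_cons => /and4P [h1 h2 h3 h4].
have [IH1 IH2] := IH _ h4.
split; last by rewrite cf_cons (stp_shift d h2 h3) IH2 cf_cons.
rewrite (stp_shift d h2 h3) IH1 h2 /= andbT.
apply/andP; split; first by rewrite (eqP h1). rewrite /shift /=; lia.
Qed.

Lemma endc_last (Q : finType) (g : config Q) s : endc g s = last g (cf g s).
Proof. by rewrite /cf /= last_scanl. Qed.

Lemma posrun_endc_shift (Q : finType) (O : ocs Q) g s d :
  posrun O g s -> endc (shift d g) s = shift d (endc g s).
Proof.
move=> h; have [_ E] := posrun_shift d h.
by rewrite !endc_last E last_map.
Qed.

Lemma endc_state (Q : finType) (g : config Q) t s : (endc g (t :: s)).1 = ttgt (last t s).
Proof. by elim: s g t => [|t' s IH] g t //=; rewrite IH. Qed.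

Lemma endc_take (Q : finType) (g : config Q) s p : p <= size s ->
  endc g (take p s) = nth g (cf g s) p.
Proof. by move=> h; rewrite /cf nth_cons_scanl. Qed.

Lemma seff_cons (Q : finType) t (s : seq (trans Q)) : seff (t :: s) = (teff t + seff s)%R.
Proof. by rewrite /seff big_cons. Qed.

Lemma seff_cat (Q : finType) (s1 s2 : seq (trans Q)) : seff (s1 ++ s2) = (seff s1 + seff s2)%R.
Proof. by rewrite /seff big_cat. Qed.

Lemma posrun_eff (Q : finType) (O : ocs Q) g s :
  posrun O g s -> Posz (endc g s).2 = (Posz g.2 + seff s)%R.
Proof.
elim: s g => [|t s IH] g; first by rewrite /seff big_nil addr0.
rewrite posrun_cons => /and4P [h1 h2 h3 h4].
rewrite /= IH // seff_cons /stp /Defs.next /=.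
move: (teff_bounds h2) => /andP [b1 b2]. lia.
Qed.

Lemma posrun_Tpos (Q : finType) (O : ocs Q) g s : posrun O g s -> all (Tpos O) s.
Proof.
elim: s g => [|t s IH] g //. rewrite posrun_cons => /and4P [_ h2 _ h4].
by rewrite /= h2 (IH _ h4).
Qed.

Lemma valid_consistent (Q : finType) (O : ocs Q) g s : valid_from O g s ->
  consistent s /\ (forall t s', s = t :: s' -> tsrc t = g.1).
Proof.
elim: s g => [|t s IH] g //=. move=> /andP [f v]. have [c1 c2] := IH _ v.
split; last by move=> t' s' [<- _]; move: f => /andP [/eqP -> _].
case: s c1 c2 {IH v} => [|t2 s] //= c1 c2. by rewrite c1 (c2 t2 s erefl) /stp /Defs.next /= eqxx.
Qed.

Lemma walk (Q : finType) (O : ocs Q) s (q : Q) (c : nat) :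
  consistent s -> all (Tpos O) s -> (forall t s', s = t :: s' -> tsrc t = q) ->
  size s < c -> posrun O (q, c) s.
Proof.
elim: s q c => [|t s IH] q c /=.
  by move=> _ _ _ h; rewrite /posrun /= h.
move=> hc /andP [ht hs] hq hsz.
rewrite posrun_cons (hq t s erefl) eqxx ht /=. apply/andP; split; first lia.
have [b1 b2] := andP (teff_bounds ht).
apply: IH => //.
- by clear hq; case: s hc {hs hsz} => [|t2 s] //= /andP [].
- move=> t2 s2 E; subst s. by move: hc => /= /andP [/eqP <- _].
- rewrite /stp /Defs.next /=. lia.
Qed.

Lemma simple_size (Q : finType) (O : ocs Q) s : simple_cycle O s -> size s <= n_states Q.
Proof.
move=> /andP [_ u]. rewrite /n_states -(size_map (@tsrc Q)).
move/card_uniqP: u => <-. exact: max_card.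
Qed.

Lemma cycle_run (Q : finType) (O : ocs Q) s (q : Q) (c : nat) :
  simple_cycle O s -> q = base_state s q -> n_states Q < c ->
  posrun O (q, c) s /\ (endc (q, c) s).1 = q.
Proof.
move=> hs hq hc. have hsz := simple_size hs.
move: hs => /andP [hcy _]. case: s hcy hq hsz => [|t s] //= /and3P [hT hcon hl] hq hsz.
split; last by rewrite endc_state (eqP hl) hq.
apply: walk => //=; last by lia.
by move=> t' s' [<- _].
Qed.

Lemma flatten_nseqS (T : Type) (s : seq T) k : flatten (nseq k.+1 s) = s ++ flatten (nseq k s).
Proof. by []. Qed.

Lemma pump_pos (Q : finType) (O : ocs Q) s (q : Q) (c k : nat) :
  simple_cycle O s -> q = base_state s q -> n_states Q < c -> (0 < seff s)%R ->
  posrun O (q, c) (flatten (nseq k s)) /\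
  endc (q, c) (flatten (nseq k s)) = (q, c + k * absz (seff s)).
Proof.
move=> hs hq + hpos. elim: k c => [|k IH] c hc.
  by rewrite /posrun /= addn0; split => //; lia.
have [r1 r2] := cycle_run hs hq hc.
have e := posrun_eff r1.
have E : endc (q, c) s = (q, c + absz (seff s)).
  move: r2 e; case: (endc (q, c) s) => a b /= -> e. congr (_, _). lia.
have [IH1 IH2] := IH (c + absz (seff s)) ltac:(lia).
rewrite flatten_nseqS posrun_cat endc_cat E r1 IH1 IH2. split => //. congr (_, _). lia.
Qed.

Lemma pump_neg (Q : finType) (O : ocs Q) s (q : Q) (c k : nat) :
  simple_cycle O s -> q = base_state s q -> n_states Q < c -> (seff s < 0)%R ->
  posrun O (q, c + k * absz (- seff s)%R) (flatten (nseq k s)) /\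
  endc (q, c + k * absz (- seff s)%R) (flatten (nseq k s)) = (q, c).
Proof.
move=> hs hq hc hneg. elim: k => [|k IH].
  by rewrite /posrun /= !addn0; split => //; lia.
have hc' : n_states Q < c + k.+1 * absz (- seff s)%R by lia.
have [r1 r2] := cycle_run hs hq hc'.
have e := posrun_eff r1.
have E : endc (q, c + k.+1 * absz (- seff s)%R) s = (q, c + k * absz (- seff s)%R).
  move: r2 e; case: (endc _ s) => a b /= -> e. congr (_, _). lia.
have [IH1 IH2] := IH.
rewrite flatten_nseqS posrun_cat endc_cat E r1 IH1 IH2. by split.
Qed.

Lemma count0_all (Q : finType) (l : seq (config Q)) :
  count (fun x : config Q => x.2 == 0%N) l = 0 -> all (fun x : config Q => 0 < x.2) l.
Proof. elim: l => [|x l IH] //=. case: eqP => //= h /IH ->. by rewrite andbT lt0n; apply/eqP. Qed.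

Lemma all_count0 (Q : finType) (l : seq (config Q)) :
  all (fun x : config Q => 0 < x.2) l -> count (fun x : config Q => x.2 == 0%N) l = 0.
Proof. elim: l => [|x l IH] //= /andP [h /IH ->]. by case: eqP h => // ->. Qed.

Lemma posrun_zc (Q : finType) (O : ocs Q) g s : posrun O g s -> zc g s = 0.
Proof. by move=> /andP [_ /all_count0]. Qed.

Lemma arc_zc (Q : finType) (O : ocs Q) p : is_arc O p -> zc (psrc p) (ptr p) <= 2.
Proof.
move=> /and4P [_ _ _ hi]. move: hi. rewrite /pinter /zc /cf -/(pafter p).
case/lastP: (pafter p) => [|b e] /=; first by case: (_ == _).
rewrite size_rcons /= -cats1 take_size_cat // => /all_count0.
rewrite count_cat /= => ->. by case: (_ == _); case: (_ == _).
Qed.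

Lemma decomp5 (Q : finType) (r p1 p2 p3 p4 p5 : opath Q) :
  decomp r [:: p1; p2; p3; p4; p5] ->
  [/\ ptr r = ptr p1 ++ ptr p2 ++ ptr p3 ++ ptr p4 ++ ptr p5,
      psrc p1 = psrc r, psrc p2 = ptgt p1, psrc p3 = ptgt p2 & psrc p4 = ptgt p3 /\ psrc p5 = ptgt p4].
Proof.
rewrite /decomp /= => /and3P [/and5P [e1 e2 e3 e4 _] /eqP h /eqP ->].
by rewrite !cats0 h (eqP e1) (eqP e2) (eqP e3) (eqP e4).
Qed.

Lemma nfacts (Q : finType) (O : ocs Q) sigp sigm S T (r pref up cap down suff : opath Q) a b :
  sigma_ok O sigp sigm ->
  normal_decomp O sigp sigm S T r pref up cap down suff a b ->
  good_decomp O sigp sigm S T pref up cap down suff a b ->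
  [/\ ptr r = (ptr pref ++ ptr up) ++ ptr cap ++ (ptr down ++ ptr suff),
      psrc cap = endc (psrc r) (ptr pref ++ ptr up),
      endc (ptgt cap) (ptr down ++ ptr suff) = ptgt r,
      (psrc r).2 = 0%N & (ptgt r).2 = 0%N] /\
  [/\ valid_from O (psrc r) (ptr pref ++ ptr up),
      zc (psrc r) (ptr pref ++ ptr up) = 1,
      posrun O (psrc cap) (ptr cap),
      valid_from O (ptgt cap) (ptr down ++ ptr suff) &
      zc (ptgt cap) (ptr down ++ ptr suff) = 1] /\
  [/\ n_states Q < (psrc cap).2, n_states Q < (ptgt cap).2,
      (psrc cap).1 = base_state (sigp S) (psrc cap).1,
      (ptgt cap).1 = base_state (sigm T) (ptgt cap).1 &
      ptr r != [::]] /\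
  [&& simple_cycle O (sigp S), (0 < seff (sigp S))%R & contained S (sigp S)] /\
  [&& simple_cycle O (sigm T), (seff (sigm T) < 0)%R & contained T (sigm T)].
Proof.
move=> [Hp Hm] [[hS hT hpe hne] [[harc hdec] [[_ _ _ _] [hb1 hb2]]]] [_ _ _ [hv1 hv2] _].
have [E1 s1 s2 s3 [s4 s5]] := decomp5 hdec.
have hsp := Hp _ hS hpe. have hsm := Hm _ hT hne.
have harc' := harc. move: harc' => /and4P [hval h0 ht0 _].
have E2 : psrc cap = endc (psrc r) (ptr pref ++ ptr up).
  by rewrite s3 ptgtE s2 ptgtE s1 endc_cat.
have hv1' : n_states Q < (psrc cap).2 by rewrite s3.
have hv2' : n_states Q < (ptgt cap).2 by rewrite -s4.
have Er : ptr r = (ptr pref ++ ptr up) ++ ptr cap ++ (ptr down ++ ptr suff) by rewrite E1 !catA.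
have E3 : endc (ptgt cap) (ptr down ++ ptr suff) = ptgt r.
  by rewrite [ptgt r]ptgtE Er (endc_cat (psrc r)) -E2 (endc_cat (psrc cap)) -ptgtE.
move: hval; rewrite /pvalid Er (valid_cat _ _ (ptr pref ++ ptr up)) -E2 (valid_cat _ _ (ptr cap)) -ptgtE => /and3P [va vb vc].
have z2 := arc_zc harc. rewrite Er in z2.
have za := zc_cat (psrc r) (ptr pref ++ ptr up) (ptr cap ++ (ptr down ++ ptr suff)).
have zb := zc_cat (psrc cap) (ptr cap) (ptr down ++ ptr suff).
rewrite -E2 in za. rewrite -ptgtE in zb.
have g1 := zc_ge1 (psrc r) (ptr pref ++ ptr up).
have g2 := zc_ge2 (ptgt cap) (ptr down ++ ptr suff). rewrite E3 in g2.
rewrite (eqP h0) in g1. rewrite (eqP ht0) in g2.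
have n1 : ((psrc cap).2 == 0%N) = false by lia.
have n2 : ((ptgt cap).2 == 0%N) = false by lia.
rewrite n1 in za. rewrite n2 in zb.
have zc0 : zc (psrc cap) (ptr cap) = 0 by lia.
split; first by split => //; apply/eqP.
split.
  split => //; try lia. apply/andP; split => //. apply: count0_all. exact: zc0.
split; last by [].
split => //.
apply/negP => /eqP E. have P1 : ptr pref ++ ptr up = [::] by move: E; case: (ptr pref ++ ptr up).
move: E2; rewrite P1 /= => E2. move: hv1'. rewrite E2. move/eqP: h0 => ->. lia.
Qed.

Lemma chain_endc (Q : finType) (ps : seq (opath Q)) (x0 : opath Q) g k :
  chain ps -> psrc (head x0 ps) = g -> k < size ps ->
  endc g (flatten (map (@ptr Q) (take k ps))) = psrc (nth x0 ps k).
Proof.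
elim: ps g k => [|p ps IH] g k //= hc hg hk.
case: k hk => [|k] hk /=; first by rewrite hg.
rewrite endc_cat -hg -ptgtE. case: ps IH hc hk => [|p2 ps] IH //= /andP [/eqP e hc] hk.
by apply: IH => //=; rewrite e.
Qed.

Lemma rhos_split (T : Type) (s : seq T) (x0 : T) i j : i < j -> j < size s ->
  s = take i s ++ nth x0 s i :: drop i.+1 (take j s) ++ nth x0 s j :: drop j.+1 s.
Proof.
move=> hij hj.
rewrite -[s in LHS](cat_take_drop j) (drop_nth x0 hj).
rewrite -[take j s in LHS](cat_take_drop i) take_takel ?(ltnW hij) //.
rewrite (drop_nth x0 (n := i)); last by rewrite size_take hj.
by rewrite nth_take // -catA.
Qed.

Lemma zc_cat3 (Q : finType) (g : config Q) s1 s2 s3 :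
  zc g (s1 ++ s2 ++ s3) + ((endc g s1).2 == 0%N) + ((endc (endc g s1) s2).2 == 0%N) =
  zc g s1 + zc (endc g s1) s2 + zc (endc (endc g s1) s2) s3.
Proof.
have h1 := zc_cat g s1 (s2 ++ s3). have h2 := zc_cat (endc g s1) s2 s3. lia.
Qed.

Lemma take_split (T : Type) (s : seq T) (x0 : T) i j : i < j -> j < size s ->
  take j s = take i s ++ nth x0 s i :: drop i.+1 (take j s).
Proof.
move=> hij hj.
rewrite -[take j s in LHS](cat_take_drop i) take_takel ?(ltnW hij) //.
rewrite (drop_nth x0 (n := i)); last by rewrite size_take hj.
by rewrite nth_take.
Qed.

Lemma dvd_eff (a b M : nat) (e : int) : Posz b = (Posz a + e)%R -> a = b %[mod M] -> (M %| absz e)%N.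
Proof.
move=> he hm. case: (leqP a b) => hab.
  have -> : absz e = b - a by lia.
  by rewrite -eqn_mod_dvd // hm.
have -> : absz e = a - b by lia.
by rewrite -eqn_mod_dvd ?(ltnW hab) // hm.
Qed.

Lemma ex_kl1 (u v A B : nat) : 0 < A -> 0 < B -> u = v %[mod A] ->
  exists k l, u + k * A = v + l * B.
Proof.
move=> hA hB hm.
have Hu := divn_eq u A. have Hv := divn_eq v A.
have hq : u %/ A <= u * B by rewrite (leq_trans (leq_div u A)) // leq_pmulr.
set qu := u %/ A in Hu hq. set qv := v %/ A in Hv.
rewrite hm in Hu. set r := v %% A in Hu Hv.
exists (qv + u * B - qu), (A * u).
clearbody qu qv r. rewrite mulnBl mulnDl.
have h2 : qu * A <= u * B * A by rewrite leq_mul2r hq orbT.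
nia.
Qed.

Lemma ex_kl2 (u v A B : nat) : 0 < A -> 0 < B -> u = v %[mod B] ->
  exists k l, u + k * A = v + l * B.
Proof.
move=> hA hB hm. have [l [k h]] := @ex_kl1 v u B A hB hA (esym hm). exists k, l. lia.
Qed.

Lemma within (Q : finType) (O : ocs Q) g s u v :
  posrun O g s -> u < v -> v <= size s ->
  (nth g (cf g s) u).1 = (nth g (cf g s) v).1 ->
  [/\ infix (drop u (take v s)) s, is_cycle O (drop u (take v s)) &
      Posz (nth g (cf g s) v).2 = (Posz (nth g (cf g s) u).2 + seff (drop u (take v s)))%R].
Proof.
move=> hr huv hv hst.
set c := drop u (take v s).
have Es : s = take u s ++ c ++ drop v s.
  by rewrite catA /c -{1}(take_takel s (ltnW huv)) cat_take_drop cat_take_drop.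
have Ev : take v s = take u s ++ c by rewrite /c -{1}(take_takel s (ltnW huv)) cat_take_drop.
have eu := endc_take g (ltnW (leq_ltn_trans (leqnn u) (leq_trans huv hv))).
have ev := endc_take g hv.
have hr' := hr. rewrite {1}Es posrun_cat posrun_cat eu in hr'. case/and3P: hr' => _ hc _.
have ec : endc (nth g (cf g s) u) c = nth g (cf g s) v by rewrite -eu -endc_cat -Ev ev.
split.
- apply/infixP. exists (take u s), (drop v s). exact: Es.
- have hsz : size c = v - u by rewrite /c size_drop size_takel.
  have [hcon hsrc] := valid_consistent (andP hc).1.
  have hT := posrun_Tpos hc.
  have cn : c != [::] by rewrite -size_eq0 hsz; clear -huv; lia.
  clearbody c. case: c cn hcon hsrc hT ec {hsz Es Ev hc} => [|t c'] // _ hcon hsrc /andP [ht hT'] ec.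
  rewrite /is_cycle. apply/and3P; split; [by apply/andP | done | ]. have := endc_state (nth g (cf g s) u) t c'. rewrite ec => <-.
  by rewrite (hsrc t c' erefl) hst.
- by rewrite -ec (posrun_eff hc).
Qed.

Lemma splice (Q : finType) (O : ocs Q)
    (sigp sigm : {set Q} -> seq (trans Q))
    (Hsig : sigma_ok O sigp sigm)
    (alpha beta : config Q)
    (rho : opath Q)
    (Hrho : pvalid O rho /\ psrc rho = alpha /\ ptgt rho = beta)
    (Hmin : forall p', pvalid O p' -> psrc p' = alpha -> ptgt p' = beta ->
              (nzeros rho <= nzeros p')%N)
    (rhos : seq (opath Q)) (Hdec : decomp rho rhos)
    (isN : nat -> bool)
    (Sof Tof : nat -> {set Q}) (a b : nat -> nat)
    (pref up cap down suff : nat -> opath Q)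
    (HN : forall i, (i < size rhos)%N -> isN i ->
       normal_decomp O sigp sigm (Sof i) (Tof i) (nth rho rhos i)
         (pref i) (up i) (cap i) (down i) (suff i) (a i) (b i) /\
       good_decomp O sigp sigm (Sof i) (Tof i)
         (pref i) (up i) (cap i) (down i) (suff i) (a i) (b i))
    i j p p' k l :
  i < j -> j < size rhos -> isN i -> isN j ->
  p <= size (ptr (cap i)) -> p' <= size (ptr (cap j)) ->
  (nth (psrc (cap i)) (cf (psrc (cap i)) (ptr (cap i))) p).1 =
  (nth (psrc (cap j)) (cf (psrc (cap j)) (ptr (cap j))) p').1 ->
  (nth (psrc (cap i)) (cf (psrc (cap i)) (ptr (cap i))) p).2 + k * Aof sigp (Sof i) =
  (nth (psrc (cap j)) (cf (psrc (cap j)) (ptr (cap j))) p').2 + l * Bof sigm (Tof j) ->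
  False.
Proof.
move=> hij hj hNi hNj hp hp' hst heq.
have hi : i < size rhos by lia.
have [hNdi hGi] := HN i hi hNi. have [hNdj hGj] := HN j hj hNj.
have [[Ei E2i E3i s0i t0i] [[vai zai pri vci zci] [[n1i n2i b1i b2i nei] [hspi hsmi]]]] := nfacts Hsig hNdi hGi.
have [[Ej E2j E3j s0j t0j] [[vaj zaj prj vcj zcj] [[n1j n2j b1j b2j nej] [hspj hsmj]]]] := nfacts Hsig hNdj hGj.
move: Hrho => [hval [hsrc htgt]].
move: Hdec => /and3P [hch /eqP hhd /eqP hptr].
have Hs := rhos_split rho hij hj.
have Ht := take_split rho hij hj.
set ai := nth rho rhos i in Ei E2i E3i s0i t0i vai zai nei Hs Ht.
set aj := nth rho rhos j in Ej E2j E3j s0j t0j vcj zcj nej Hs.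
set F1 := flatten (map (@ptr Q) (take i rhos)).
set M := flatten (map (@ptr Q) (drop i.+1 (take j rhos))).
set F2 := flatten (map (@ptr Q) (drop j.+1 rhos)).
have Eptr : ptr rho = F1 ++ (ptr ai ++ M ++ ptr aj) ++ F2.
  rewrite hptr {1}Hs map_cat flatten_cat /= map_cat flatten_cat /=.
  by rewrite !catA.
have e1 : endc alpha F1 = psrc ai.
  by rewrite /F1 (chain_endc (x0 := rho) (g := alpha) hch) // hhd.
have e2 : endc (ptgt ai) M = psrc aj.
  have := chain_endc (x0 := rho) (g := alpha) (k := j) hch (etrans hhd hsrc) hj.
  by rewrite Ht map_cat flatten_cat /= endc_cat e1 endc_cat -ptgtE.
have e3 : endc (psrc ai) (ptr ai ++ M ++ ptr aj) = ptgt aj.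
  by rewrite endc_cat -ptgtE endc_cat e2 -ptgtE.
have e4 : endc (ptgt aj) F2 = beta.
  by move: htgt; rewrite ptgtE Eptr hsrc (endc_cat alpha) e1 (endc_cat (psrc ai)) e3.
move: (hval); rewrite /pvalid hsrc Eptr (valid_cat _ alpha) e1 (valid_cat _ (psrc ai)) e3 => /and3P [vF1 _ vF2].
have hsimp_i : simple_cycle O (sigp (Sof i)) by case/and3P: hspi.
have hpos_i : (0 < seff (sigp (Sof i)))%R by case/and3P: hspi.
have [pk1 pk2] := pump_pos k hsimp_i b1i n1i hpos_i.
have Em1 : ((psrc (cap i)).1, (psrc (cap i)).2) = psrc (cap i) by case: (psrc (cap i)).
rewrite Em1 in pk1 pk2.
set m1 := psrc (cap i) in pk1 pk2 pri hst heq hp E2i n1i Em1.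
set Ci := ptr (cap i) in pri hst heq hp Ei.
set Pk := flatten (nseq k (sigp (Sof i))) in pk1 pk2.
have pk2' : endc m1 Pk = shift (k * Aof sigp (Sof i)) m1 by rewrite pk2.
move: (pri); rewrite -(cat_take_drop p Ci) posrun_cat => /andP [prT _].
have [sh1 _] := posrun_shift (k * Aof sigp (Sof i)) prT.
have sh2 := posrun_endc_shift (k * Aof sigp (Sof i)) prT.
rewrite [endc m1 _]endc_take // in sh2.
set x := nth m1 (cf m1 Ci) p in hst heq sh2.
set X := (ptr (pref i) ++ ptr (up i)) ++ Pk ++ take p Ci.
have vX : valid_from O (psrc ai) X.
  rewrite /X (valid_cat _ (psrc ai)) -E2i vai (valid_cat _ m1) pk2'.
  by case/andP: pk1 => -> _; case/andP: sh1 => -> _.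
have eX : endc (psrc ai) X = shift (k * Aof sigp (Sof i)) x.
  by rewrite /X (endc_cat (psrc ai)) -E2i (endc_cat m1) pk2' sh2.
have zX : zc (psrc ai) X <= 1.
  have h := zc_cat3 (psrc ai) (ptr (pref i) ++ ptr (up i)) Pk (take p Ci).
  rewrite -E2i pk2' (posrun_zc pk1) (posrun_zc sh1) zai in h. rewrite /X. clear -h. lia.
have hsimp_j : simple_cycle O (sigm (Tof j)) by case/and3P: hsmj.
have hneg_j : (seff (sigm (Tof j)) < 0)%R by case/and3P: hsmj.
have [pl1 pl2] := pump_neg l hsimp_j b2j n2j hneg_j.
have Em2 : ((ptgt (cap j)).1, (ptgt (cap j)).2) = ptgt (cap j) by case: (ptgt (cap j)).
rewrite Em2 in pl2.
set m2 := ptgt (cap j) in pl1 pl2 b2j n2j Em2 E3j vcj zcj.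
set Cj := ptr (cap j) in prj hst heq hp' Ej.
set m1j := psrc (cap j) in prj hst heq hp' Ej E2j.
set Pl := flatten (nseq l (sigm (Tof j))) in pl1 pl2.
have pl1' : posrun O (shift (l * Bof sigm (Tof j)) m2) Pl by [].
have Ed : endc (endc m1j (take p' Cj)) (drop p' Cj) = m2.
  by rewrite -endc_cat cat_take_drop /m2 ptgtE.
move: (prj); rewrite -(cat_take_drop p' Cj) posrun_cat => /andP [_ prD].
have [shY1 _] := posrun_shift (l * Bof sigm (Tof j)) prD.
have shY2 := posrun_endc_shift (l * Bof sigm (Tof j)) prD.
rewrite Ed in shY2.
rewrite [endc m1j _]endc_take // in shY1 shY2 Ed.
set y := nth m1j (cf m1j Cj) p' in hst heq shY1 shY2 Ed.
have Exy : shift (k * Aof sigp (Sof i)) x = shift (l * Bof sigm (Tof j)) y.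
  by rewrite /shift hst heq.
set Y := drop p' Cj ++ Pl ++ (ptr (down j) ++ ptr (suff j)).
have vY : valid_from O (shift (l * Bof sigm (Tof j)) y) Y.
  rewrite /Y (valid_cat _ (shift _ y)) shY2 (valid_cat _ (shift _ m2)) pl2 vcj andbT.
  by case/andP: pl1' => -> _; case/andP: shY1 => -> _.
have eY : endc (shift (l * Bof sigm (Tof j)) y) Y = ptgt aj.
  by rewrite /Y (endc_cat (shift _ y)) shY2 (endc_cat (shift _ m2)) pl2 E3j.
have zY : zc (shift (l * Bof sigm (Tof j)) y) Y <= 1.
  have h := zc_cat3 (shift (l * Bof sigm (Tof j)) y) (drop p' Cj) Pl (ptr (down j) ++ ptr (suff j)).
  rewrite shY2 pl2 (posrun_zc pl1') (posrun_zc shY1) zcj in h. rewrite /Y. clear -h. lia.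
have vXY : valid_from O (psrc ai) (X ++ Y) by rewrite valid_cat vX eX Exy vY.
have eXY : endc (psrc ai) (X ++ Y) = ptgt aj by rewrite endc_cat eX Exy eY.
have zXY : zc (psrc ai) (X ++ Y) <= 2.
  have h := zc_cat (psrc ai) X Y. rewrite eX Exy in h. clear -h zX zY. lia.
have zW : 3 <= zc (psrc ai) (ptr ai ++ M ++ ptr aj).
  have h := zc_cat (psrc ai) (ptr ai) (M ++ ptr aj).
  have g1 := zc_ge (psrc ai) nei. rewrite -ptgtE in g1 h.
  have neMj : M ++ ptr aj != [::] by move: nej; rewrite -!size_eq0 size_cat; clear; lia.
  have g2 := zc_ge (ptgt ai) neMj. rewrite endc_cat e2 -ptgtE in g2.
  move: g1 g2 h. rewrite s0i t0i t0j /=. clear. lia.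
have := Hmin (OPath alpha (F1 ++ (X ++ Y) ++ F2)).
rewrite /pvalid /= valid_cat e1 valid_cat eXY vF1 vXY vF2 => /(_ isT erefl).
rewrite ptgtE /= endc_cat e1 endc_cat eXY e4 => /(_ erefl).
rewrite !nzerosE /= hsrc Eptr.
have h1 := zc_cat3 alpha F1 (ptr ai ++ M ++ ptr aj) F2.
have h2 := zc_cat3 alpha F1 (X ++ Y) F2.
rewrite e1 e3 in h1. rewrite e1 eXY in h2.
clear -h1 h2 zW zXY. lia.
Qed.

Definition capc (Q : finType) (cap : nat -> opath Q) i p :=
  nth (psrc (cap i)) (cf (psrc (cap i)) (ptr (cap i))) p.

Definition keyrel (Q : finType) sigp sigm (Sof Tof : nat -> {set Q}) (cap : nat -> opath Q) i j p p' :=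
  (capc cap i p).1 = (capc cap j p').1 /\
  ((Sof i = Sof j /\ (capc cap i p).2 = (capc cap j p').2 %[mod Aof sigp (Sof i)]) \/
   (Tof i = Tof j /\ (capc cap i p).2 = (capc cap j p').2 %[mod Bof sigm (Tof i)])).

Lemma keyrel_sym (Q : finType) sigp sigm (Sof Tof : nat -> {set Q}) (cap : nat -> opath Q) i j p p' :
  keyrel sigp sigm Sof Tof cap i j p p' -> keyrel sigp sigm Sof Tof cap j i p' p.
Proof.
move=> [h1 [[e h]|[e h]]]; split => //; [left|right]; by rewrite -e.
Qed.

Lemma AB_pos (Q : finType) (O : ocs Q) sigp sigm S T :
  [&& simple_cycle O (sigp S), (0 < seff (sigp S))%R & contained S (sigp S)] ->
  [&& simple_cycle O (sigm T), (seff (sigm T) < 0)%R & contained T (sigm T)] ->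
  0 < Aof sigp S /\ 0 < Bof sigm T.
Proof.
move=> /and3P [_ h1 _] /and3P [_ h2 _]. rewrite /Aof /Bof. split; lia.
Qed.

Lemma inj_core (Q : finType) (O : ocs Q)
    (sigp sigm : {set Q} -> seq (trans Q))
    (Hsig : sigma_ok O sigp sigm)
    (alpha beta : config Q)
    (rho : opath Q)
    (Hrho : pvalid O rho /\ psrc rho = alpha /\ ptgt rho = beta)
    (Hmin : forall p', pvalid O p' -> psrc p' = alpha -> ptgt p' = beta ->
              (nzeros rho <= nzeros p')%N)
    (rhos : seq (opath Q)) (Hdec : decomp rho rhos)
    (isN : nat -> bool)
    (Sof Tof : nat -> {set Q}) (a b : nat -> nat)
    (pref up cap down suff : nat -> opath Q)
    (HN : forall i, (i < size rhos)%N -> isN i ->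
       normal_decomp O sigp sigm (Sof i) (Tof i) (nth rho rhos i)
         (pref i) (up i) (cap i) (down i) (suff i) (a i) (b i) /\
       good_decomp O sigp sigm (Sof i) (Tof i)
         (pref i) (up i) (cap i) (down i) (suff i) (a i) (b i))
    i j p p' :
  i < size rhos -> j < size rhos -> isN i -> isN j ->
  p <= size (ptr (cap i)) -> p' <= size (ptr (cap j)) ->
  keyrel sigp sigm Sof Tof cap i j p p' -> i = j /\ p = p'.
Proof.
have lt_case : forall i j p p', i < j -> j < size rhos -> isN i -> isN j ->
    p <= size (ptr (cap i)) -> p' <= size (ptr (cap j)) ->
    keyrel sigp sigm Sof Tof cap i j p p' -> False.
  move=> i0 j0 p0 p0' hij hj hNi hNj hp hp' [hst hk].
  have hi : i0 < size rhos by apply: ltn_trans hj.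
  have [hNdi hGi] := HN i0 hi hNi. have [hNdj hGj] := HN j0 hj hNj.
  have [_ [_ [_ [hspi hsmi]]]] := nfacts Hsig hNdi hGi.
  have [_ [_ [_ [hspj hsmj]]]] := nfacts Hsig hNdj hGj.
  have [Ai _] := AB_pos hspi hsmi. have [_ Bj] := AB_pos hspj hsmj.
  have [k [l hkl]] : exists k l, (capc cap i0 p0).2 + k * Aof sigp (Sof i0) =
                                 (capc cap j0 p0').2 + l * Bof sigm (Tof j0).
    case: hk => [[e h]|[e h]]; first exact: ex_kl1.
    by rewrite e in h; apply: ex_kl2.
  exact: (splice Hsig Hrho Hmin Hdec HN hij hj hNi hNj hp hp' hst hkl).
have eq_case : forall i p p', i < size rhos -> isN i -> p < p' -> p' <= size (ptr (cap i)) ->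
    keyrel sigp sigm Sof Tof cap i i p p' -> False.
  move=> i0 p0 p0' hi hNi hpp hp' [hst hk].
  have [hNdi hGi] := HN i0 hi hNi.
  have [_ [[_ _ pri _ _] _]] := nfacts Hsig hNdi hGi.
  have [hinf hcyc heff] := within pri hpp hp' hst.
  move: hGi => [_ _ hv _ _].
  have := hv _ hinf hcyc. move/negP; apply.
  case: hk => [[_ h]|[_ h]].
    exact: (dvdn_trans (dvdn_gcdl _ _) (dvd_eff heff h)).
  exact: (dvdn_trans (dvdn_gcdr _ _) (dvd_eff heff h)).
move=> hi hj hNi hNj hp hp' hk.
case: (ltngtP i j) => hij.
- by case: (lt_case _ _ _ _ hij hj hNi hNj hp hp' hk).
- by case: (lt_case _ _ _ _ hij hi hNj hNi hp' hp (keyrel_sym hk)).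
- subst j. split => //. case: (ltngtP p p') => hpp //.
  + by case: (eq_case _ _ _ hi hNi hpp hp' hk).
  + by case: (eq_case _ _ _ hi hNi hpp hp (keyrel_sym hk)).
Qed.

Lemma scc_eq (Q : finType) (O : ocs Q) (S1 S2 : {set Q}) w :
  is_scc O S1 -> is_scc O S2 -> w \in S1 -> w \in S2 -> S1 = S2.
Proof.
have key : forall S, is_scc O S -> w \in S -> S = [set p | connect (gedge O) w p && connect (gedge O) p w].
  move=> S [q ->]; rewrite inE => /andP [hqw hwq].
  apply/setP => p; rewrite !inE; apply/idP/idP => /andP [h1 h2]; apply/andP; split.
  - exact: connect_trans hwq h1.
  - exact: connect_trans h2 hqw.
  - exact: connect_trans hqw h1.
  - exact: connect_trans h2 hwq.
move=> h1 h2 w1 w2. by rewrite (key _ h1 w1) (key _ h2 w2).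
Qed.

Lemma eff_size (Q : finType) (O : ocs Q) (s : seq (trans Q)) : all (Tpos O) s -> absz (seff s) <= size s.
Proof.
elim: s => [|t s IH] /=; first by rewrite /seff big_nil.
move=> /andP [ht hs]. have := IH hs. have := teff_bounds ht. rewrite seff_cons => /andP [b1 b2] h. lia.
Qed.

Lemma count_bound (N : nat) (P : pred nat) (L : nat -> nat) (K : eqType)
    (key : nat -> nat -> K) (U : seq K) :
  (forall i j p p', i < N -> j < N -> P i -> P j -> p <= L i -> p' <= L j ->
     key i p = key j p' -> i = j /\ p = p') ->
  (forall i p, i < N -> P i -> p <= L i -> key i p \in U) ->
  \sum_(i < N | P i) (L i).+1 <= size U.
Proof.
move=> hinj hU.
set I := [seq i <- iota 0 N | P i].
set s := [seq (i, p) | i <- I, p <- iota 0 (L i).+1].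
have Hs : \sum_(i < N | P i) (L i).+1 = size s.
  rewrite size_allpairs_dep sumnE big_map /I big_filter.
  under eq_bigr do rewrite size_iota.
  by rewrite -(big_mkord P (fun i => (L i).+1)) /index_iota subn0.
have us : uniq s.
  apply: allpairs_uniq_dep.
  - by rewrite filter_uniq // iota_uniq.
  - by move=> x _; rewrite iota_uniq.
  - by move=> [i1 p1] [i2 p2] _ _ /= [e1 e2]; subst.
have sm : forall ip, ip \in s -> [/\ ip.1 < N, P ip.1 & ip.2 <= L ip.1].
  move=> ip /allpairsPdep [i [p [hi hp ->]]] /=.
  move: hi; rewrite mem_filter mem_iota => /and3P [hP _ h].
  move: hp; rewrite mem_iota => h'. split => //; lia.
have um : uniq [seq key ip.1 ip.2 | ip <- s].
  rewrite map_inj_in_uniq // => ip1 ip2 h1 h2 e.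
  have [a1 b1 c1] := sm _ h1. have [a2 b2 c2] := sm _ h2.
  have [e1 e2] := hinj _ _ _ _ a1 a2 b1 b2 c1 c2 e.
  by move: e1 e2; case: ip1 {h1 a1 b1 c1 e}; case: ip2 {h2 a2 b2 c2} => /= ? ? ? ? -> ->.
rewrite Hs -(size_map (fun ip => key ip.1 ip.2)).
apply: uniq_leq_size => // k /mapP [ip /sm [h1 h2 h3] ->]. exact: hU.
Qed.

Unset Implicit Arguments.
Theorem lemma6 (Q : finType) (O : ocs Q)
    (sigp sigm : {set Q} -> seq (trans Q))
    (Hsig : sigma_ok O sigp sigm)
    (alpha beta : config Q) (Halpha : alpha.2 = 0%N) (Hbeta : beta.2 = 0%N)
    (rho : opath Q)
    (Hrho : pvalid O rho /\ psrc rho = alpha /\ ptgt rho = beta)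
    (Hmin : forall p', pvalid O p' -> psrc p' = alpha -> ptgt p' = beta ->
              (nzeros rho <= nzeros p')%N)
    (rhos : seq (opath Q)) (Hdec : decomp rho rhos)
    (Harcs : forall i, (i < size rhos)%N -> is_arc O (nth rho rhos i))
    (isN : nat -> bool)
    (HL : forall i, (i < size rhos)%N -> ~~ isN i -> min_low_arc O (nth rho rhos i))
    (Sof Tof : nat -> {set Q}) (a b : nat -> nat)
    (pref up cap down suff : nat -> opath Q)
    (HN : forall i, (i < size rhos)%N -> isN i ->
       normal_decomp O sigp sigm (Sof i) (Tof i) (nth rho rhos i)
         (pref i) (up i) (cap i) (down i) (suff i) (a i) (b i) /\
       good_decomp O sigp sigm (Sof i) (Tof i)
         (pref i) (up i) (cap i) (down i) (suff i) (a i) (b i))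
    (S T : {set Q}) (HS : is_scc O S) (HSp : pos_enabled O S)
    (HT : is_scc O T) (HTn : neg_enabled O T) :
  (\sum_(i < size rhos | isN i && (Sof i == S)) plen (cap i)
      <= Aof sigp S * n_states Q)%N /\
  (\sum_(i < size rhos | isN i && (Tof i == T)) plen (cap i)
      <= n_states Q * Bof sigm T)%N /\
  (\sum_(i < size rhos | isN i) plen (cap i) <= n_states Q ^ 2)%N.
Proof.
have core := inj_core Hsig Hrho Hmin Hdec HN.
have sumS : forall P : pred nat, \sum_(i < size rhos | P i) plen (cap i) <=
                                 \sum_(i < size rhos | P i) (plen (cap i)).+1.
  by move=> P; apply: leq_sum => i _.
have [HA HB] := AB_pos (Hsig.1 S HS HSp) (Hsig.2 T HT HTn).
split; last split.
- apply: (@leq_trans (\sum_(i < size rhos | isN i && (Sof i == S)) (plen (cap i)).+1)); first by apply: leq_sum => i _.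
  have := @count_bound (size rhos) (fun i => isN i && (Sof i == S)) (fun i => plen (cap i)) _
    (fun i p => ((capc cap i p).1, (capc cap i p).2 %% Aof sigp S))
    [seq (q, r) | q <- enum Q, r <- iota 0 (Aof sigp S)].
  rewrite size_allpairs size_iota.
  rewrite /n_states cardE mulnC. apply.
  + move=> i j p p' hi hj /andP [hNi /eqP ei] /andP [hNj /eqP ej] hp hp' e; case: e => e1 e2.
    apply: core => //. split => //. left. rewrite ei ej. split => //.
  + move=> i p hi _ hp. apply/allpairsP. exists ((capc cap i p).1, (capc cap i p).2 %% Aof sigp S).
    by rewrite mem_enum mem_iota ltn_pmod.
- apply: (@leq_trans (\sum_(i < size rhos | isN i && (Tof i == T)) (plen (cap i)).+1)); first by apply: leq_sum => i _.
  have := @count_bound (size rhos) (fun i => isN i && (Tof i == T)) (fun i => plen (cap i)) _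
    (fun i p => ((capc cap i p).1, (capc cap i p).2 %% Bof sigm T))
    [seq (q, r) | q <- enum Q, r <- iota 0 (Bof sigm T)].
  rewrite size_allpairs size_iota.
  rewrite /n_states cardE. apply.
  + move=> i j p p' hi hj /andP [hNi /eqP ei] /andP [hNj /eqP ej] hp hp' e; case: e => e1 e2.
    apply: core => //. split => //. right. rewrite ei ej. split => //.
  + move=> i p hi _ hp. apply/allpairsP. exists ((capc cap i p).1, (capc cap i p).2 %% Bof sigm T).
    by rewrite mem_enum mem_iota ltn_pmod.
- apply: (@leq_trans (\sum_(i < size rhos | isN i) (plen (cap i)).+1)); first by apply: leq_sum => i _.
  pose w i p := nth (capc cap i p).1 (cycle_states (sigp (Sof i)))
                    ((capc cap i p).2 %% Aof sigp (Sof i)).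
  have wfacts : forall i p, i < size rhos -> isN i ->
      [/\ w i p \in Sof i, is_scc O (Sof i), uniq (cycle_states (sigp (Sof i))),
          (capc cap i p).2 %% Aof sigp (Sof i) < size (cycle_states (sigp (Sof i))) &
          0 < Aof sigp (Sof i)].
    move=> i p hi hNi. have [hNd hG] := HN i hi hNi.
    have [_ [_ [_ [hsp hsm]]]] := nfacts Hsig hNd hG.
    have [hA _] := AB_pos hsp hsm.
    move: hNd => [[hS _ _ _] _].
    move: hsp => /and3P [/andP [hcy hu] _ hc].
    have hlt : (capc cap i p).2 %% Aof sigp (Sof i) < size (cycle_states (sigp (Sof i))).
      apply: (leq_trans (ltn_pmod _ hA)). rewrite size_map.
      have hT : all (Tpos O) (sigp (Sof i)).
        by move: hcy; rewrite /is_cycle; case: (sigp (Sof i)) => // t s /and3P [].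
      exact: eff_size hT.
    split => //. move: hc; rewrite /contained => /allP; apply. exact: mem_nth.
  have := @count_bound (size rhos) isN (fun i => plen (cap i)) _
    (fun i p => ((capc cap i p).1, w i p))
    [seq (q, r) | q <- enum Q, r <- enum Q].
  rewrite size_allpairs /n_states cardE mulnn. apply.
  + move=> i j p p' hi hj hNi hNj hp hp' e; case: e => e1 e2.
    have [wi hSi ui lti Ai] := wfacts i p hi hNi.
    have [wj hSj uj ltj Aj] := wfacts j p' hj hNj.
    have eS : Sof i = Sof j by apply: (scc_eq hSi hSj wi); rewrite e2.
    apply: core => //. split => //. left. split => //.
    move: e2; rewrite /w e1 eS. rewrite eS in lti. move/eqP; rewrite nth_uniq //.
    by move/eqP.
  + move=> i p hi _ hp. apply/allpairsP. exists ((capc cap i p).1, w i p).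
    by rewrite !mem_enum.
Qed.
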